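(* Let $R$ be a commutative noetherian ring and let $N$ be a spectral object of the category $R\text{-}Mod$ of $R$-modules. Let $M$ be a finitely generated $R$-module such that $\langle N\rangle\in Supp(M)$. Then $Hom_{R\text{-}Mod}(M,N)\neq 0$.
   Context: For an abelian category $\mathcal A$ and objects $X,Y$, write $X\prec Y$ if $X$ is a subquotient of a direct sum of finitely many copies of $Y$, and $X\approx Y$ if $X\prec Y\prec X$. $\langle X\rangle$ denotes the full subcategory of objects $Y$ with $X\not\prec Y$. A nonzero object $P$ is spectral if $Q\approx P$ for every nonzero subobject $Q\subseteq P$. For an object $M$, $Supp(M)=\{\langle P\rangle\mid P$ spectral, $P\prec M\}$. *)

(* Defs.v *)
(* R-modules are modeled as MathComp [lmodType R]. *)
From HB Require Import structures.
From mathcomp Require Import all_boot all_order all_algebra.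
Set Implicit Arguments. Unset Strict Implicit. Unset Printing Implicit Defensive.
Import GRing.Theory.
Local Open Scope ring_scope.

Definition is_ideal (R : comRingType) (I : R -> Prop) : Prop :=
  I 0 /\ (forall x y, I x -> I y -> I (x + y)) /\ (forall r x, I x -> I (r * x)).

Definition noetherian_ring (R : comRingType) : Prop :=
  forall I : R -> Prop, is_ideal I ->
    exists s : seq R, forall x, I x <->
      exists c : 'I_(size s) -> R, x = \sum_(i < size s) c i * s`_i.

Definition fin_gen_mod (R : comRingType) (M : lmodType R) : Prop :=
  exists s : seq M, forall m : M,
    exists c : 'I_(size s) -> R, m = \sum_(i < size s) c i *: s`_i.

Definition is_submod (R : comRingType) (M : lmodType R) (A : M -> Prop) : Prop :=
  A 0 /\ forall (a : R) u v, A u -> A v -> A (a *: u + v).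

Definition is_submod_pow (R : comRingType) (Y : lmodType R) (n : nat)
  (B : ('I_n -> Y) -> Prop) : Prop :=
  B (fun _ => 0) /\
  forall (a : R) u v, B u -> B v -> B (fun i => a *: u i + v i).

(* [subquot A C]: the submodule A of X is a subquotient of a finite direct sum
   of copies of the submodule C of Y: there are n, a submodule B of C^n
   (inside Y^n) and an R-linear map B -> A which is surjective onto A. *)
Definition subquot (R : comRingType) (X Y : lmodType R)
  (A : X -> Prop) (C : Y -> Prop) : Prop :=
  exists (n : nat) (B : ('I_n -> Y) -> Prop) (f : ('I_n -> Y) -> X),
    [/\ is_submod_pow B,
        (forall u, B u -> forall i, C (u i)),
        (forall (a : R) u v, B u -> B v ->
             f (fun i => a *: u i + v i) = a *: f u + f v),
        (forall u, B u -> A (f u)) &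
        (forall x, A x -> exists2 u, B u & f u = x)].

Definition prec (R : comRingType) (X Y : lmodType R) : Prop :=
  subquot (fun _ : X => True) (fun _ : Y => True).

Definition nonzero_mod (R : comRingType) (X : lmodType R) : Prop :=
  exists x : X, x != 0.

(* Spectral object: nonzero, and every nonzero subobject Q satisfies Q ≈ P. *)
Definition spectral (R : comRingType) (P : lmodType R) : Prop :=
  nonzero_mod P /\
  forall Q : P -> Prop, is_submod Q -> (exists2 q, Q q & q != 0) ->
    subquot Q (fun _ : P => True) /\ subquot (fun _ : P => True) Q.

(* Objects of the full subcategory <X>: those Y with ~ (X ≺ Y). *)
Definition in_angle (R : comRingType) (X Y : lmodType R) : Prop := ~ prec X Y.

(* <P> = <N> as full subcategories (same objects). *)
Definition angle_eq (R : comRingType) (P N : lmodType R) : Prop :=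
  forall Y : lmodType R, in_angle P Y <-> in_angle N Y.

Definition in_Supp (R : comRingType) (N M : lmodType R) : Prop :=
  exists P : lmodType R, [/\ spectral P, prec P M & angle_eq P N].

Definition hom_nonzero (R : comRingType) (M N : lmodType R) : Prop :=
  exists f : M -> N,
    (forall (a : R) u v, f (a *: u + v) = a *: f u + f v) /\
    exists m : M, f m != 0.

(* Main.v *)
Require Import Defs.
From mathcomp Require Import all_boot all_order all_algebra.
From Stdlib Require Import Classical ClassicalEpsilon FunctionalExtensionality.
Set Implicit Arguments. Unset Strict Implicit. Unset Printing Implicit Defensive.
Import GRing.Theory.
Local Open Scope ring_scope.

Lemma ann_prec (R : comRingType) (X Y : lmodType R) (r : R) :
  prec X Y -> (forall y : Y, r *: y = 0) -> forall x : X, r *: x = 0.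
Proof.
move=> [n [B [f [[B0 BS] _ flin _ fsurj]]]] Hr x.
have [u Bu <-] := fsurj x I.
have f0 : f (fun _ => 0) = 0.
  have := flin 1 _ _ B0 B0.
  have -> : (fun i : 'I_n => 1 *: (0 : Y) + 0) = (fun _ => 0).
    by apply: functional_extensionality => i; rewrite scale1r addr0.
  rewrite scale1r => e; apply: (@addrI _ (f (fun _ => 0))).
  by rewrite addr0 -e.
have := flin r _ _ Bu B0.
have -> : (fun i : 'I_n => r *: u i + 0) = (fun _ => 0).
  by apply: functional_extensionality => i; rewrite Hr addr0.
by rewrite f0 addr0 => <-.
Qed.

Lemma prec_refl (R : comRingType) (X : lmodType R) : prec X X.
Proof.
exists 1%N, (fun _ => True), (fun u => u ord0); split => //.
by move=> x _; exists (fun _ => x).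
Qed.

Lemma nat_max (P : nat -> Prop) b : P 0%N -> (forall t, P t -> (t <= b)%N) ->
  exists t, P t /\ forall t', P t' -> (t' <= t)%N.
Proof.
move=> P0 Pb; apply: NNPP => H.
have step : forall t, P t -> exists t', P t' /\ (t < t')%N.
  move=> t Pt; apply: NNPP => H2; apply: H; exists t; split => // t' Pt'.
  rewrite leqNgt; apply/negP => lt; apply: H2; by exists t'.
have : forall n, exists t, P t /\ (n <= t)%N.
  elim=> [|n [t [Pt nt]]]; first by exists 0%N.
  have [t' [Pt' tt']] := step t Pt; exists t'; split => //.
  exact: leq_ltn_trans nt tt'.
move=> /(_ b.+1) [t [Pt bt]]; have := Pb t Pt; by rewrite leqNgt bt.
Qed.

Lemma det_noninj (R : comRingType) t k (C : 'M[R]_(t, k)) (J : 'I_t -> 'I_k) :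
  ~ injective J -> \det (colsub J C) = 0.
Proof.
move=> nJ.
have [i1 [i2 [e ne]]] : exists i1 i2, J i1 = J i2 /\ i1 <> i2.
  apply: NNPP => H; apply: nJ => i1 i2 e; apply: NNPP => ne; apply: H.
  by exists i1, i2.
rewrite -det_tr; apply: (determinant_alternate (i1 := i1) (i2 := i2)).
  by apply/eqP.
by move=> j; rewrite !mxE e.
Qed.

Lemma adj_kill (R : comRingType) (M : lmodType R) n (A : 'M[R]_n) (w : 'I_n -> M) :
  (forall l, \sum_i A l i *: w i = 0) -> forall i, \det A *: w i = 0.
Proof.
move=> H i.
have : \sum_l \adj A i l *: (\sum_i' A l i' *: w i') = 0.
  by apply: big1 => l _; rewrite H scaler0.
under eq_bigr do rewrite scaler_sumr.
rewrite exchange_big /=.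
under eq_bigr do (under eq_bigr do rewrite scalerA; rewrite -scaler_suml).
have key : forall i', \sum_l \adj A i l * A l i' = ((\det A)%:M : 'M[R]_n) i i'.
  by move=> i'; rewrite -mul_adj_mx !mxE.
under eq_bigr => i' _ do rewrite key.
move=> <-; rewrite (bigD1 i) //= big1 ?addr0; first by rewrite mxE eqxx mulr1n.
by move=> j /negPf nj; rewrite mxE eq_sym nj mulr0n scale0r.
Qed.

Lemma span_kill (R : comRingType) (M : lmodType R) (s : seq M) (r : R) :
  (forall m : M, exists c : 'I_(size s) -> R, m = \sum_(i < size s) c i *: s`_i) ->
  (forall j : 'I_(size s), r *: s`_j = 0) -> forall m : M, r *: m = 0.
Proof.
move=> Hs Hr m; have [c ->] := Hs m.
rewrite scaler_sumr; apply: big1 => i _.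
by rewrite scalerA mulrC -scalerA Hr scaler0.
Qed.

Lemma key (R : comRingType) (M N : lmodType R) (x : N) :
  x != 0 -> fin_gen_mod M ->
  (forall r, (forall m : M, r *: m = 0) -> r *: x = 0) -> hom_nonzero M N.
Proof.
move=> nx [s Hs] Hann.
set k := size s.
pose rel (v : 'I_k -> R) := \sum_(i < k) v i *: s`_i = 0.
pose good t := exists (C : 'M[R]_(t, k)) (J : 'I_t -> 'I_k),
  (forall l, rel (C l)) /\ \det (colsub J C) *: x != 0.
have good0 : good 0%N.
  exists 0, (widen_ord (leq0n k)); split; first by case.
  by rewrite det_mx00 scale1r.
have goodb : forall t, good t -> (t <= k)%N.
  move=> t [C [J [_ HJ]]].
  have [injJ|ninjJ] := classic (injective J).
    by have := @leq_card _ _ J injJ; rewrite !card_ord.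
  by move: HJ; rewrite det_noninj // scale0r eqxx.
have [t [[C [J [relC HJ]]] tmax]] := nat_max good0 goodb.
have injJ : injective J.
  apply: NNPP => ninjJ; by move: HJ; rewrite det_noninj // scale0r eqxx.
have [[j0 Hj0]|nsurj] := classic (exists j0, forall i, J i != j0); last first.
  exfalso.
  have surj : forall j, exists i, J i = j.
    move=> j; apply: NNPP => H; apply: nsurj; exists j => i; apply/eqP => e.
    by apply: H; exists i.
  pose g j := proj1_sig (constructive_indefinite_description _ (surj j)).
  have gK : cancel g J := fun j => proj2_sig (constructive_indefinite_description _ (surj j)).
  have bijJ : bijective J.
    apply: (@inj_card_bij _ _ J injJ); exact: (@leq_card _ _ g (can_inj gK)).
  have kill := adj_kill (A := colsub J C) (w := fun i => s`_(J i)).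
  have : forall i, \det (colsub J C) *: s`_(J i) = 0.
    apply: kill => l.
    under eq_bigr do rewrite mxE.
    have := relC l; rewrite /rel (reindex J) //.
    by apply: onW_bij.
  move=> Hk; move/negP: HJ; apply; apply/eqP; apply: Hann.
  apply: (span_kill Hs) => j; by rewrite -(gK j) Hk.
pose J' (l : 'I_t.+1) : 'I_k := oapp J j0 (unlift ord0 l).
pose D (v : 'I_k -> R) : 'M[R]_(t.+1, k) :=
  \matrix_(l, j) oapp (fun l' => C l' j) (v j) (unlift ord0 l).
pose kap (i : 'I_t.+1) := cofactor (colsub J' (D (fun _ => 0))) ord0 i.
pose psi (v : 'I_k -> R) := \sum_(i < t.+1) v (J' i) * kap i.
have psiE : forall v, \det (colsub J' (D v)) = psi v.
  move=> v; rewrite (expand_det_row _ ord0); apply: eq_bigr => i _.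
  rewrite !mxE unlift_none /=; congr (_ * _).
  rewrite /kap /cofactor; congr (_ * \det _); apply/matrixP => a b.
  by rewrite !mxE liftK.
have psi_rel : forall v, rel v -> psi v *: x = 0.
  move=> v rv; rewrite -psiE; apply/eqP; apply: NNPP => H.
  have : good t.+1.
    exists (D v), J'; split; last by apply/negP.
    move=> l; rewrite /rel; under eq_bigr do rewrite mxE.
    by case: (unlift ord0 l) => [l'|] /=; [apply: relC | apply: rv].
  by move/tmax; rewrite ltnn.
have psiB : forall v w, psi (fun i => v i - w i) = psi v - psi w.
  by move=> v w; rewrite /psi -sumrB; apply: eq_bigr => i _; rewrite mulrBl.
have psi_wd : forall v w, \sum_(i < k) v i *: s`_i = \sum_(i < k) w i *: s`_i ->
    psi v *: x = psi w *: x.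
  move=> v w e; apply/eqP; rewrite -subr_eq0 -scalerBl -psiB; apply/eqP.
  apply: psi_rel; rewrite /rel.
  under eq_bigr do rewrite scalerBl.
  by rewrite sumrB e subrr.
pose coef (m : M) := proj1_sig (constructive_indefinite_description _ (Hs m)).
have coefE : forall m, m = \sum_(i < k) coef m i *: s`_i :=
  fun m => proj2_sig (constructive_indefinite_description _ (Hs m)).
exists (fun m => psi (coef m) *: x); split.
  move=> a u v.
  have -> : psi (coef (a *: u + v)) *: x = psi (fun i => a * coef u i + coef v i) *: x.
    apply: psi_wd; rewrite -coefE.
    under eq_bigr do rewrite scalerDl -scalerA.
    by rewrite big_split /= -scaler_sumr -!coefE.
  rewrite scalerA -scalerDl; congr (_ *: _).
  rewrite /psi mulr_sumr -big_split /=; apply: eq_bigr => i _.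
  by rewrite mulrDl mulrA.
exists s`_j0.
have -> : psi (coef s`_j0) *: x = psi (fun j => (j == j0)%:R) *: x.
  apply: psi_wd; rewrite -coefE (bigD1 j0) //= big1 ?addr0 ?eqxx ?scale1r //.
  by move=> j /negPf ->; rewrite scale0r.
have -> : psi (fun j => (j == j0)%:R) = \det (colsub J C).
  rewrite /psi big_ord_recl /= /J' unlift_none /= eqxx mul1r big1 ?addr0.
    rewrite /kap /cofactor /= expr0 mul1r; congr (\det _); apply/matrixP => a b.
    by rewrite !mxE liftK /J' /= liftK.
  by move=> i _; rewrite liftK /= (negPf (Hj0 i)) mul0r.
exact: HJ.
Qed.

Theorem proposition4p1 (R : comRingType) (N M : lmodType R) :
  noetherian_ring R -> spectral N -> fin_gen_mod M -> in_Supp N M ->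
  hom_nonzero M N.
Proof.
move=> _ [[x nx] _] fgM [P [_ PM eqPN]].
have NP : prec N P.
  apply: NNPP => H.
  have : in_angle N P by [].
  by move/(eqPN P); apply; apply: prec_refl.
apply: (key nx fgM) => r Hr.
exact: (ann_prec NP (ann_prec PM Hr)).
Qed.
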